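(* Let $\mathbf X$ be a $d$-dimensional continuous random vector with identical marginals. If $\mathbf X\in\mathrm{IC}^d$, then its correlation matrix coincides with its tail-dependence matrix, and also with its $\kappa_g$-matrix for every $g$ admissible for the standard uniform distribution.
   Context: For non-degenerate finite-variance $X,Y$, $(X,Y)$ has invariant correlation $r$ if $\mathrm{Corr}(X,Y)=\mathrm{Corr}(g(X),g(Y))=r$ for every measurable $g$ with $g(X),g(Y)$ non-degenerate of finite variance; $\mathbf X\in\mathrm{IC}^d$ means there is a matrix $R=(r_{ij})$ with $(X_i,X_j)$ having invariant correlation $r_{ij}$ for all $i,j$. For continuous $(X_i,X_j)$ with marginals $F_i,F_j$, the lower tail-dependence coefficient is $\lambda_{ij}=\lim_{u\downarrow0}\mathbb P(F_i(X_i)\le u,F_j(X_j)\le u)/u$; the tail-dependence matrix is $(\lambda_{ij})$. For $g:\mathbb R\to\mathbb R$, $\kappa_g(X_i,X_j)=\mathrm{Corr}(g(F_i(X_i)),g(F_j(X_j)))$ and the $\kappa_g$-matrix is $(\kappa_g(X_i,X_j))_{d\times d}$. $g$ is admissible for the standard uniform distribution if it is measurable and $g(U)$ is non-degenerate with finite variance for $U$ standard uniform. *)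

(* Defs.v *)
From HB Require Import structures.
From mathcomp Require Import all_boot all_order all_algebra.
From mathcomp Require Import all_classical all_reals all_analysis.
Set Implicit Arguments. Unset Strict Implicit. Unset Printing Implicit Defensive.
Import Order.TTheory GRing.Theory Num.Theory.
Import numFieldNormedType.Exports.
Local Open Scope classical_set_scope.
Local Open Scope ring_scope.

Section defs.
Context {d0 : measure_display} {T : measurableType d0} {R : realType}.
Variable P : probability T R.

Definition nondegenerate (X : T -> R) : Prop :=
  forall c : R, P [set t | X t = c] != 1%E.

Definition nondeg_L2 (X : T -> R) : Prop :=
  X \in Lfun P 2%:E /\ nondegenerate X.

Definition corr (X Y : T -> R) : R :=
  fine (covariance P X Y) / Num.sqrt (fine 'V_P[X] * fine 'V_P[Y]).

Definition inv_corr (X Y : T -> R) (r : R) : Prop :=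
  nondeg_L2 X /\ nondeg_L2 Y /\ corr X Y = r /\
  forall g : R -> R, measurable_fun setT g ->
    nondeg_L2 (g \o X) -> nondeg_L2 (g \o Y) -> corr (g \o X) (g \o Y) = r.

Definition IC (n : nat) (X : 'I_n -> T -> R) : Prop :=
  exists Rm : 'M[R]_n, forall i j, inv_corr (X i) (X j) (Rm i j).

Definition marg_cdf (X : {RV P >-> R}) (x : R) : R := fine (cdf X x).

End defs.

(* g is admissible for the standard uniform distribution: measurable, and
   g(U) non-degenerate with finite variance, U ~ Unif(0,1) being the identity
   random variable on (R, uniform_prob 0 1). *)
Definition admissible_unif (R : realType) (g : R -> R) : Prop :=
  measurable_fun setT g /\ nondeg_L2 (uniform_prob (@ltr01 R)) g.

(* Main.v *)
Require Import Defs.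
From HB Require Import structures.
From mathcomp Require Import all_boot all_order all_algebra.
From mathcomp Require Import all_classical all_reals all_analysis.
Import Order.TTheory GRing.Theory Num.Theory.
Import numFieldNormedType.Exports.
Local Open Scope classical_set_scope.
Local Open Scope ring_scope.
From mathcomp Require Import measurable_realfun ring lra.



Section level.
Context (d0 : measure_display) (T : measurableType d0) (R : realType)
  (P : probability T R) (X : {RV P >-> R}).
Hypothesis Fc : continuous (marg_cdf X).
Local Notation F := (marg_cdf X).

Lemma FE x : F x = fine (P (X @^-1` `]-oo, x])).
Proof. by []. Qed.

Lemma Fle x y : x <= y -> F x <= F y.
Proof.
move=> xy; rewrite /marg_cdf fine_le ?fin_num_measure//; first exact: cdf_nondecreasing.
Qed.

Lemma F_ge0 x : 0 <= F x.
Proof. by rewrite /marg_cdf fine_ge0. Qed.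

Lemma F_le1 x : F x <= 1.
Proof.
rewrite /marg_cdf -lee_fin fineK ?fin_num_measure//; exact: cdf_le1.
Qed.

Lemma FNy : F x @[x --> -oo%R] --> 0.
Proof. exact: (fine_cvg (cvg_cdfNy0 X)). Qed.

Lemma Fy : F x @[x --> +oo%R] --> (1:R).
Proof. exact: (fine_cvg (cvg_cdfy1 X)). Qed.

Lemma level u : 0 < u < 1 ->
  exists x, F x = u /\ forall y, (F y <= u) = (y <= x).
Proof.
move=> /andP[u0 u1].
pose S := [set y | F y <= u].
have [y0 Fy0] : exists y, F y < u.
  exact: (filter_ex (cvgr_lt 0 FNy u u0)).
have [y1 Fy1] : exists y, u < F y.
  exact: (filter_ex (cvgr_gt 1 Fy u u1)).
have Sub : ubound S y1.
  move=> y /= Fyu; rewrite leNgt; apply/negP => /ltW/Fle.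
  by move=> /le_trans/(_ Fyu); rewrite leNgt Fy1.
have hS : has_sup S by split; [exists y0; exact: ltW | exists y1].
pose x := sup S.
have Fxu : F x <= u.
  rewrite leNgt; apply/negP => uFx.
  have Fxl : F z @[z --> x^'-] --> F x.
    exact: cvg_at_left_filter (Fc x).
  have [z [zx uz]] : exists z, z < x /\ u < F z.
    apply: (filter_ex (F := x^'-)).
    near=> z; split; first by near: z; exact: nbhs_left_lt.
    by near: z; exact: (cvgr_gt _ Fxl).
  have : x <= z.
    apply: ge_sup; first by exists y0; exact: ltW.
    move=> y /= Fyu; rewrite leNgt; apply/negP => /ltW/Fle.
    by move=> /le_trans/(_ Fyu); rewrite leNgt uz.
  by rewrite leNgt zx.
have uFx : u <= F x.
  rewrite leNgt; apply/negP => Fxu'.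
  have Fxr : F z @[z --> x^'+] --> F x.
    exact: cvg_at_right_filter (Fc x).
  have [z [zx uz]] : exists z, x < z /\ F z < u.
    apply: (filter_ex (F := x^'+)).
    near=> z; split; first by near: z; exact: nbhs_right_gt.
    by near: z; exact: (cvgr_lt _ Fxr).
  have : z <= x by apply: sup_upper_bound => //=; exact: ltW.
  by rewrite leNgt zx.
have Fxeq : F x = u by apply/eqP; rewrite eq_le Fxu uFx.
exists x; split => // y; apply/idP/idP.
- by move=> Fyu; exact: sup_upper_bound.
- by move=> /Fle; rewrite Fxeq.
Unshelve. all: by end_near.
Qed.

End level.



Section indic.
Context (d0 : measure_display) (T : measurableType d0) (R : realType)
  (P : probability T R).

Lemma Lfun_bdd (f : T -> R) (M : R) (r : R) : 0 < r ->
  measurable_fun setT f -> (forall t, `|f t| <= M) -> f \in Lfun P r%:E.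
Proof.
move=> r0 mf fM.
rewrite inE/=; apply/andP; split; rewrite inE//=.
rewrite /finite_norm unlock poweR_lty//.
apply: (@le_lt_trans _ _ (\int[P]_x (cst ((M `^ r)%:E) x))%E).
  apply: ge0_le_integral => //.
  - by move=> t _; rewrite lee_fin powR_ge0.
  - apply/measurable_EFinP.
    apply: (@measurableT_comp _ _ _ _ _ _ (@powR R ^~ r)) => //.
    exact: measurableT_comp.
  - move=> t _; rewrite lee_fin /= ge0_ler_powR// ?nnegrE//.
    exact: ltW.
    exact: (le_trans (normr_ge0 _) (fM t)).
have := integral_cst P (@measurableT _ T) ((M `^ r)%:E).
rewrite /= => ->; rewrite probability_setT mule1; exact: ltry.
Qed.

Lemma indic_bdd (A : set T) t : `|(\1_A : T -> R) t| <= 1.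
Proof. by rewrite indicE; case: (t \in A); rewrite ?normr1 ?normr0. Qed.

Lemma Lfun_indic (A : set T) (r : R) : 0 < r -> measurable A ->
  (\1_A : T -> R) \in Lfun P r%:E.
Proof.
move=> r0 mA; apply: (@Lfun_bdd _ 1 r r0 _ (@indic_bdd A)).
exact: measurable_indic.
Qed.

Lemma cov_indic (A B : set T) : measurable A -> measurable B ->
  fine (covariance P (\1_A) (\1_B)) =
  fine (P (A `&` B)) - fine (P A) * fine (P B).
Proof.
move=> mA mB.
have AB : (\1_A * \1_B)%R = \1_(A `&` B) :> (T -> R) by rewrite indicI.
rewrite covarianceE ?Lfun_indic//; last first.
  by rewrite AB; apply: Lfun_indic => //; exact: measurableI.
rewrite AB !expectation_indic//; last exact: measurableI.
rewrite -[P (A `&` B)]fineK ?fin_num_measure//; last exact: measurableI.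
by rewrite -[P A]fineK ?fin_num_measure// -[P B]fineK ?fin_num_measure//.
Qed.

Lemma var_indic (A : set T) : measurable A ->
  fine ('V_P[\1_A]) = fine (P A) - fine (P A) ^+ 2.
Proof. by move=> mA; rewrite /variance cov_indic// setIid expr2. Qed.

Lemma corr_indic (A B : set T) : measurable A -> measurable B ->
  let a := fine (P A) in let b := fine (P B) in
  corr P (\1_A) (\1_B) =
  (fine (P (A `&` B)) - a * b) / Num.sqrt ((a - a ^+ 2) * (b - b ^+ 2)).
Proof. by move=> mA mB; rewrite /corr cov_indic// !var_indic. Qed.


Lemma nondeg_indic (B : set T) : measurable B ->
  0 < fine (P B) < 1 -> nondeg_L2 P (\1_B : T -> R).
Proof.
move=> mB /andP[p0 p1]; split; first exact: Lfun_indic.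
move=> c.
have PB : P B = (fine (P B))%:E by rewrite fineK ?fin_num_measure.
have [c0|c0] := eqVneq c 0.
  subst c.
  have mS : measurable [set t | (\1_B : T -> R) t = 0].
    have := @measurable_indic _ _ R setT _ mB measurableT _ (measurable_set1 0).
    by rewrite setTI.
  have sub : [set t | (\1_B : T -> R) t = 0] `<=` ~` B.
    move=> t /= /eqP; rewrite indicE pnatr_eq0 eqb0 => /negP tB Bt.
    by apply: tB; rewrite mem_set.
  have := le_measure P (mem_set mS) (mem_set (measurableC mB)) sub.
  move=> h; have h2 : (P [set t | (\1_B : T -> R) t = 0%R] <= 1 - P B)%E by move: h; rewrite -(probability_setC P mB).
  move: h2; clear h; rewrite PB => h; apply/eqP => h1; move: h.
  rewrite h1 -EFinB lee_fin => h; have : 0 <= - fine (P B) by rewrite -(lerD2l 1) addr0.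
  by rewrite oppr_ge0 leNgt p0.
have mS : measurable [set t | (\1_B : T -> R) t = c].
  have := @measurable_indic _ _ R setT _ mB measurableT _ (measurable_set1 c).
  by rewrite setTI.
have sub : [set t | (\1_B : T -> R) t = c] `<=` B.
  move=> t /= ht; apply: contrapT => Bt; move: c0.
  by rewrite -ht indicE memNset// eqxx.
have h := le_measure P (mem_set mS) (mem_set mB) sub.
have h2 : (P [set t | (\1_B : T -> R) t = c] <= P B)%E := h.
move: h2; clear h; rewrite PB => h; apply/eqP => h1; move: h.
by rewrite h1 lee_fin leNgt p1.
Qed.

Lemma indic_comp (X : T -> R) (A0 : set R) :
  (\1_A0 : R -> R) \o X = \1_(X @^-1` A0).
Proof. by apply/funext => t; rewrite /= !indicE. Qed.

Lemma inv_corr_indic (X Y : {RV P >-> R}) (r : R) (A0 : set R) (p : R) :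
  measurable A0 -> inv_corr P X Y r ->
  fine (P (X @^-1` A0)) = p -> fine (P (Y @^-1` A0)) = p -> 0 < p < 1 ->
  fine (P (X @^-1` A0 `&` Y @^-1` A0)) = p ^+ 2 + r * (p - p ^+ 2).
Proof.
move=> mA0 [_ [_ [_ ic]]] pX pY p01.
have mXA : measurable (X @^-1` A0) by exact: measurable_funPTI.
have mYA : measurable (Y @^-1` A0) by exact: measurable_funPTI.
have := ic (\1_A0) (@measurable_indic _ _ R setT _ mA0).
rewrite !indic_comp.
move=> /(_ (nondeg_indic _ mXA _) (nondeg_indic _ mYA _)).
rewrite pX pY => /(_ p01 p01).
rewrite corr_indic// pX pY.
have pp : 0 < p - p ^+ 2.
  case/andP: p01 => p0 p1; rewrite expr2 -{1}(mulr1 p) -mulrBr mulr_gt0// subr_gt0//.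
rewrite -expr2 sqrtr_sqr gtr0_norm// => h.
rewrite -h divfK ?gt_eqF//.
by rewrite [p ^+ 2]expr2 addrC subrK.
Qed.

End indic.



Section tail.
Context (d0 : measure_display) (T : measurableType d0) (R : realType)
  (P : probability T R).

Lemma lim_aux (r : R) : (fun u : R => u + r * (1 - u)) x @[x --> 0^'+] --> r.
Proof.
apply: cvg_at_right_filter.
have h : (fun u : R => u + r * (1 - u)) x @[x --> 0] --> 0 + r * (1 - 0).
  apply: cvgD; first exact: cvg_id.
  apply: cvgM; first exact: cvg_cst.
  apply: cvgB; first exact: cvg_cst.
  exact: cvg_id.
by rewrite add0r subr0 mulr1 in h.
Qed.

Lemma tail_lemma (X Y : {RV P >-> R}) (r : R) :
  continuous (marg_cdf X) -> marg_cdf Y = marg_cdf X -> inv_corr P X Y r ->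
  (fun u => fine (P [set t | marg_cdf X (X t) <= u /\ marg_cdf Y (Y t) <= u]) / u)
    x @[x --> 0^'+] --> r.
Proof.
move=> Fc FYX ic.
apply: cvg_trans (lim_aux r).
apply: near_eq_cvg; near=> u.
have u0 : 0 < u by near: u; exact: nbhs_right_gt.
have u1 : u < 1 by near: u; exact: nbhs_right_lt.
have [x [Fx Fiff]] := @level _ _ _ P X Fc u (introT andP (conj u0 u1)).
have -> : [set t | marg_cdf X (X t) <= u /\ marg_cdf Y (Y t) <= u] =
    X @^-1` `]-oo, x] `&` Y @^-1` `]-oo, x].
  apply/seteqP; split => t /=; rewrite FYX !in_itv /= !Fiff //.
have pX : fine (P (X @^-1` `]-oo, x])) = u by rewrite -FE.
have pY : fine (P (Y @^-1` `]-oo, x])) = u by rewrite -FE FYX.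
rewrite (@inv_corr_indic _ _ _ P X Y r _ u _ ic pX pY) ?u0 ?u1//.
rewrite /=; have un : u != 0 by rewrite gt_eqF. field. exact: un.
Unshelve. all: by end_near.
Qed.

End tail.



Section cdf_unique.
Context (R : realType).

Lemma ocitv_cdf (m : probability (measurableTypeR R) R) (a b : R) : a < b ->
  m `]a, b]%classic = (m `]-oo, b]%classic - m `]-oo, a]%classic)%E.
Proof.
move=> ab.
have E : `]-oo, b]%classic = `]-oo, a]%classic `|` `]a, b]%classic :> set R.
  by apply: itv_bndbnd_setU; rewrite bnd_simp// ltW.
rewrite E measureU//; last first.
  apply/seteqP; split => // x /=; rewrite !in_itv /= => -[xa /andP[ax _]].
  by move: (lt_le_trans ax xa); rewrite ltxx.
have -> : forall x y : \bar R, (x + y)%R = (x + y)%E by [].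
by rewrite [X in (X - _)%E]addeC addeK ?fin_num_measure.
Qed.

Lemma cdf_unique (m1 m2 : probability (measurableTypeR R) R) :
  (forall u, m1 `]-oo, u]%classic = m2 `]-oo, u]%classic) ->
  forall A, measurable A -> m1 A = m2 A.
Proof.
move=> h.
move=> A mA; have := @measure_unique _ R (measurableTypeR R) (@ocitv R) (fun k : nat => `]-k%:R, k%:R]%classic) erefl.
move=> /(_ (@ocitvI R)).
apply => //.
- by move=> k; exists (-k%:R, k%:R).
- apply/seteqP; split => // x _.
  exists (Num.truncn `|x|).+1 => //=.
  move: (truncnS_gt `|x|) => /ltr_normlP -[xl xr].
  by rewrite in_itv /= -ltrNl xl ltW.
- move=> _ [[a b] _ <-] /=.
  have [ab|ba] := ltP a b; first by rewrite !ocitv_cdf// !h.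
  by rewrite set_itv_ge ?measure0// bnd_simp -leNgt.
- by move=> k; apply: (le_lt_trans (probability_le1 _ _)) => //; exact: ltry.
Qed.

End cdf_unique.

Section unif.
Context (R : realType).
Local Notation U := (uniform_prob (@ltr01 R)).

Lemma unif_itv (u : R) : 0 < u < 1 -> U `]-oo, u]%classic = u%:E.
Proof.
case/andP => u0 u1.
rewrite /uniform_prob integral_uniform_pdf.
have -> : `]-oo, u]%classic `&` `[0, 1]%classic = `[0, u]%classic :> set R.
  apply/seteqP; split => x /=; rewrite !in_itv /=.
    by case=> xu /andP[-> _].
  case/andP => x0 xu; split => //; rewrite x0 /=.
  exact: (ltW (le_lt_trans xu u1)).
rewrite (eq_integral (fun _ => 1%:E)); last first.
  move=> x; rewrite inE /= in_itv /= => /andP[x0 xu].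
  rewrite /uniform_pdf x0 /= (ltW (le_lt_trans xu u1)) subr0 invr1 //.
rewrite integral_cst//= mul1e lebesgue_measure_itv /= lte_fin u0.
by rewrite sube0.
Qed.

Lemma unif_itv1 (u : R) : 1 <= u -> U `]-oo, u]%classic = 1%E.
Proof.
move=> u1; apply: integral_uniform_pdf1 => // x /=; rewrite !in_itv /=.
by case/andP => _ x1; exact: le_trans u1.
Qed.

Lemma small0 (v : \bar R) : (0 <= v)%E ->
  (forall e, 0 < e < 1 -> (v <= e%:E)%E) -> v = 0%E.
Proof.
move=> v0 h.
have h2a : (0:R) < 2^-1 by rewrite invr_gt0.
have h2b : (2^-1 : R) < 1 by rewrite invf_lt1 // ltr1n.
have h2 : (0:R) < 2^-1 < (1:R) by rewrite h2a h2b.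
have vh : (v <= (2^-1)%:E)%E by exact: h.
have vf : v \is a fin_num by rewrite ge0_fin_numE// (le_lt_trans vh) ?ltry.
rewrite -(fineK vf) in v0 h *; move: (fine v) v0 h => x; rewrite lee_fin => x0 h.
suff -> : x = 0 by [].
apply/eqP; rewrite eq_le x0 andbT leNgt; apply/negP => xpos.
have xh : x <= 2^-1 by rewrite -lee_fin; exact: h.
have hx : x <= x / 2.
  rewrite -lee_fin; apply: h; apply/andP; split; first lra.
  lra.
lra.
Qed.

End unif.



Section retype.
Context (R : realType) (m : probability R R).
Definition rt : set (measurableTypeR R) -> \bar R := fun A => m A.
Let rt0 : rt set0 = 0%E. Proof. exact: measure0. Qed.
Let rt_ge0 A : (0 <= rt A)%E. Proof. exact: measure_ge0. Qed.
Let rt_sa : semi_sigma_additive rt.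
Proof. move=> F mF tF mUF; exact: (@measure_semi_sigma_additive _ _ _ m F mF tF mUF). Qed.
HB.instance Definition _ := isMeasure.Build _ _ _ rt rt0 rt_ge0 rt_sa.
Let rtT : rt setT = 1%E. Proof. exact: probability_setT. Qed.
HB.instance Definition _ := Measure_isProbability.Build _ _ _ rt rtT.
End retype.

Section dist.
Context (d0 : measure_display) (T : measurableType d0) (R : realType)
  (P : probability T R) (X : {RV P >-> R}).

Lemma mF : measurable_fun setT (marg_cdf X).
Proof.
apply: nondecreasing_measurable => // x y xy; exact: Fle.
Qed.

HB.instance Definition _ := isMeasurableFun.Build _ _ _ _ (marg_cdf X) mF.

Hypothesis Fc : continuous (marg_cdf X).

Lemma dist_unif A : measurable A ->
  distribution P (marg_cdf X \o X) A = uniform_prob (@ltr01 R) A.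
Proof.
move=> mA.
have -> : distribution P (marg_cdf X \o X) A = @rt R (distribution P (marg_cdf X \o X)) A by [].
move: A mA; apply: cdf_unique => u.
change (distribution P (marg_cdf X \o X) `]-oo, u]%classic = uniform_prob (@ltr01 R) `]-oo, u]%classic).
have small (m : set R -> \bar R) (mm : forall A B, measurable A -> measurable B -> A `<=` B -> (m A <= m B)%E) (m0 : forall A, (0 <= m A)%E) : (forall e, 0 < e < 1 -> m `]-oo, e]%classic = e%:E) ->
    u <= 0 -> m `]-oo, u]%classic = 0%E.
  move=> he u0; apply: small0 => // e /andP[e0 e1].
  rewrite -(he e); last by rewrite e0 e1.
  apply: mm => //.
  move=> x /=; rewrite !in_itv /= => xu; exact: le_trans xu (le_trans u0 (ltW e0)).
have dist01 e : 0 < e < 1 -> distribution P (marg_cdf X \o X) `]-oo, e]%classic = e%:E.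
  move=> e01; have [x [Fx Fiff]] := @level _ _ _ P X Fc e e01.
  rewrite /distribution /pushforward.
  have -> : (marg_cdf X \o X) @^-1` `]-oo, e] = X @^-1` `]-oo, x].
    by apply/seteqP; split => t /=; rewrite !in_itv /= Fiff.
  have mx : measurable (X @^-1` `]-oo, x]) by exact: measurable_funPTI.
  by rewrite -Fx /marg_cdf /cdf /distribution /pushforward fineK ?(fin_num_measure _ _ mx).
have [u0|u0] := leP u 0.
  rewrite (small _ _ _ dist01 u0) ?(small _ _ _ (@unif_itv R) u0) //.
  - by move=> B C mB mC BC; apply: le_measure; rewrite ?inE.
  - by move=> B C mB mC BC; apply: le_measure; rewrite ?inE.
have [u1|u1] := leP 1 u.
  rewrite unif_itv1 // /distribution /pushforward.
  have -> : (marg_cdf X \o X) @^-1` `]-oo, u] = setT.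
    apply/seteqP; split => // t _ /=; rewrite in_itv /=.
    exact: le_trans (@F_le1 _ _ _ P X _) u1.
  by rewrite probability_setT.
by rewrite dist01 ?unif_itv ?u0 ?u1.
Qed.

End dist.



Section transfer.
Context (d0 : measure_display) (T : measurableType d0) (R : realType)
  (P : probability T R) (X : {RV P >-> R}).
Hypothesis Fc : continuous (marg_cdf X).
Local Notation U := (uniform_prob (@ltr01 R)).

Lemma transfer (g : R -> R) : nondeg_L2 U g ->
  nondeg_L2 P (g \o marg_cdf X \o X).
Proof.
move=> [Lg ndg].
have mg : measurable_fun (setT : set (measurableTypeR R)) g.
  by move: Lg; rewrite inE => /andP[]; rewrite inE.
have mY : measurable_fun setT (marg_cdf X \o X : T -> measurableTypeR R).
  exact: (measurable_funPT (marg_cdf X \o X)).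
split; last first.
  move=> c.
  have mc : measurable (g @^-1` [set c] : set (measurableTypeR R)).
    by have := mg measurableT [set c] (measurable_set1 c); rewrite setTI.
  have E : P [set t | (g \o marg_cdf X \o X) t = c] = U [set x | g x = c].
    exact: (@dist_unif _ _ _ P X Fc _ mc).
  rewrite E; exact: (ndg c).
rewrite inE; apply/andP; split.
  rewrite inE /=; exact: (measurableT_comp mg mY).
move: Lg; rewrite inE => /andP[_]; rewrite !inE /= /finite_norm unlock /=.
pose f := fun y : measurableTypeR R => (`|(g y)%:E| `^ 2)%E.
have mf : measurable_fun setT f.
  rewrite /f; under eq_fun do rewrite abse_EFin poweR_EFin.
  apply/measurable_EFinP.
  apply: (@measurableT_comp _ _ _ _ _ _ (@powR R ^~ 2)) => //.
  exact: measurableT_comp.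
have f0 : forall y, (0 <= f y)%E by move=> y; exact: poweR_ge0.
suff -> : (\int[P]_x `|(g (marg_cdf X (X x)))%:E| `^ 2)%E = (\int[U]_x f x)%E by [].
transitivity (\int[P]_(x in (marg_cdf X \o X : T -> measurableTypeR R) @^-1` setT) (f \o (marg_cdf X \o X : T -> measurableTypeR R)) x)%E.
  by rewrite preimage_setT.
rewrite -(ge0_integral_pushforward mY P measurableT (measurable_funS _ _ mf)) //.
apply: eq_measure_integral => A mA _.
exact: (@dist_unif _ _ _ P X Fc A mA).
Qed.

End transfer.



Theorem proposition10 (d0 : measure_display) (T : measurableType d0)
  (R : realType) (P : probability T R) (d : nat) (X : 'I_d -> {RV P >-> R}) :
  (* continuous random vector: continuous marginal distribution functions *)
  (forall i, continuous (marg_cdf (X i))) ->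
  (* identical marginals *)
  (forall i j, distribution P (X i) = distribution P (X j)) ->
  IC P (fun i => (X i : T -> R)) ->
  (* correlation matrix = tail-dependence matrix *)
  (forall i j,
     (fun u => fine (P [set t | marg_cdf (X i) (X i t) <= u /\
                                marg_cdf (X j) (X j t) <= u]) / u)
       x @[x --> 0^'+] --> corr P (X i) (X j)) /\
  (* correlation matrix = kappa_g-matrix for every admissible g *)
  (forall g : R -> R, admissible_unif g -> forall i j,
     corr P (g \o marg_cdf (X i) \o X i) (g \o marg_cdf (X j) \o X j)
     = corr P (X i) (X j)).
Proof.
move=> Fc Hd [Rm HR].
have Feq i j : marg_cdf (X j) = marg_cdf (X i).
  by apply/funext => x; rewrite /marg_cdf /cdf (Hd j i).
have corrE i j : corr P (X i) (X j) = Rm i j by case: (HR i j) => _ [_ [-> _]].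
split.
  move=> i j; rewrite corrE.
  exact: (@tail_lemma _ _ _ P (X i) (X j) (Rm i j) (Fc i) (Feq i j) (HR i j)).
move=> g [mg ng] i j; rewrite corrE (Feq i j).
have [_ [_ [_ ic]]] := HR i j.
apply: ic.
- exact: (measurableT_comp mg (@mF _ _ _ P (X i))).
- exact: (@transfer _ _ _ P (X i) (Fc i) g ng).
- rewrite -(Feq i j); exact: (@transfer _ _ _ P (X j) (Fc j) g ng).
Qed.
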